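(* Let $\Lambda$ be a set of positive integers such that for all positive integers $a,b$: $a,b\in\Lambda$ if and only if $\operatorname{lcm}(a,b)\in\Lambda$. Put $\Lambda'=\Lambda\cup\{2x:x\in\Lambda\}$. Suppose $\sigma=(\varepsilon,\beta,\gamma;(12))$ is an autoparatopism of a Latin square $L$ of order $n$. Let $R_\Lambda=\{i\in[n]:o_\beta(i)\in\Lambda\}$ and $S_{\Lambda'}=\{i\in[n]:o_\gamma(i)\in\Lambda'\}$. If $R_\Lambda\neq\emptyset$, then $|R_\Lambda|=|S_{\Lambda'}|$, and the submatrix of $L$ with rows $R_\Lambda$ and columns $R_\Lambda$ is a subsquare of $L$ whose symbol set is $S_{\Lambda'}$.
   Context: A Latin square $L$ of order $n$ is an $n\times n$ array with rows, columns and symbols indexed by $[n]$, in which each symbol occurs exactly once in each row and each column. Its set of triples is $O(L)$. A subsquare is a submatrix (a set of rows $R$ and columns $C$) that is itself a Latin square, i.e. whose cells contain exactly $|R|=|C|$ distinct symbols. Permutations act on the right; $\varepsilon$ is the identity. A paratopism $(\alpha,\beta,\gamma;(12))$ maps $L$ to $L^\sigma$ with triple set $\{(y\beta,x\alpha,z\gamma):(x,y,z)\in O(L)\}$. It is an autoparatopism of $L$ if $L^\sigma=L$. $o_\pi(i)$ is the length of the cycle of $\pi$ containing $i$ (fixed points are cycles of length $1$). *)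

(* Defs.v *)
From mathcomp Require Import all_boot all_fingroup.
Set Implicit Arguments. Unset Strict Implicit. Unset Printing Implicit Defensive.

(* A Latin square of order n: rows, columns, symbols indexed by 'I_n (= [n]).
   L x y is the symbol in row x, column y. *)
Definition latin_square (n : nat) (L : 'I_n -> 'I_n -> 'I_n) : Prop :=
  (forall x, injective (L x)) /\ (forall y, injective (fun x => L x y)).

Definition triples n (L : 'I_n -> 'I_n -> 'I_n) : {set 'I_n * 'I_n * 'I_n} :=
  [set (x, y, L x y) | x : 'I_n, y : 'I_n].

(* Triple set of L^sigma for sigma = (alpha, beta, gamma; (12)):
   {(y beta, x alpha, z gamma) : (x,y,z) in O(L)}. *)
Definition para12_triples n (al be ga : {perm 'I_n}) (L : 'I_n -> 'I_n -> 'I_n)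
  : {set 'I_n * 'I_n * 'I_n} :=
  [set (be t.1.2, al t.1.1, ga t.2) | t in triples L].

Definition autoparatopism12 n (al be ga : {perm 'I_n}) (L : 'I_n -> 'I_n -> 'I_n)
  : Prop := para12_triples al be ga L = triples L.

Definition cyc_len n (pi : {perm 'I_n}) (i : 'I_n) : nat := #|porbit pi i|.

Definition symbols_of n (L : 'I_n -> 'I_n -> 'I_n) (R C : {set 'I_n}) : {set 'I_n} :=
  [set L x y | x in R, y in C].

Definition is_subsquare n (L : 'I_n -> 'I_n -> 'I_n) (R C : {set 'I_n}) : Prop :=
  #|R| = #|C| /\ #|symbols_of L R C| = #|R|.

(* Lambda' = Lambda u {2x : x in Lambda} *)
Definition dbl_closure (Lam : pred nat) : pred nat :=
  fun m => (m \in Lam) || (~~ odd m && (m./2 \in Lam)).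

(* Main.v *)
Require Import Defs.
From mathcomp Require Import all_boot all_fingroup.
Set Implicit Arguments. Unset Strict Implicit.

Lemma iter_mul_cyc n (s : {perm 'I_n}) x q : iter (q * cyc_len s x) s x = x.
Proof.
elim: q => [//|q IH]; rewrite mulSn iterD IH; exact: iter_porbit.
Qed.

Lemma cyc_iter n (s : {perm 'I_n}) x k : (iter k s x == x) = (cyc_len s x %| k).
Proof.
have c0 : 0 < cyc_len s x by rewrite lt0n card_porbit_neq0.
rewrite {1}(divn_eq k (cyc_len s x)) addnC iterD iter_mul_cyc /dvdn.
have lt := ltn_pmod k c0.
have U := uniq_traject_porbit s x.
have e1 := nth_traject s lt x.
have e0 := nth_traject s c0 x.
rewrite /= in e0; rewrite -e1 -[X in nth _ _ _ == X]e0.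
rewrite nth_uniq ?size_traject //.
Qed.

Lemma cyc_pos n (s : {perm 'I_n}) x : 0 < cyc_len s x.
Proof. by rewrite lt0n card_porbit_neq0. Qed.

Section LamFacts.
Variable Lam : pred nat.
Hypothesis Lam_pos : forall a, a \in Lam -> 0 < a.
Hypothesis Lam_lcm : forall a b, 0 < a -> 0 < b ->
     ((a \in Lam) && (b \in Lam)) = (lcmn a b \in Lam).

Lemma Lam_div d m : d %| m -> m \in Lam -> d \in Lam.
Proof.
move=> dm mL; have m0 := Lam_pos mL; have d0 := dvdn_gt0 m0 dm.
by have := Lam_lcm d0 m0; rewrite (lcmn_idPr dm) mL andbT => ->.
Qed.

Lemma Lam_lcmI a b : a \in Lam -> b \in Lam -> lcmn a b \in Lam.
Proof. by move=> aL bL; rewrite -Lam_lcm ?Lam_pos // aL bL. Qed.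

Lemma dbl_intro c m : c %| m.*2 -> m \in Lam -> dbl_closure Lam c.
Proof.
move=> cm mL; rewrite /dbl_closure.
case oc: (odd c).
  by rewrite (Lam_div _ mL) // -(@Gauss_dvdr c 2) ?coprimen2 // mul2n.
rewrite orbC /= (Lam_div _ mL) //.
move: cm; rewrite -{1}(odd_double_half c) oc add0n -!muln2 dvdn_pmul2r //.
Qed.

Lemma dbl_elim c : dbl_closure Lam c -> exists2 e, e \in Lam & c %| e.*2.
Proof.
rewrite /dbl_closure => /orP [cL|/andP[oc hL]].
  by exists c => //; rewrite -mul2n dvdn_mull.
exists c./2 => //; rewrite -{1}(odd_double_half c) (negbTE oc) add0n //.
Qed.
End LamFacts.

Theorem theorem3p4 (Lam : pred nat)
  (Lam_pos : forall a, a \in Lam -> 0 < a)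
  (Lam_lcm : forall a b, 0 < a -> 0 < b ->
     ((a \in Lam) && (b \in Lam)) = (lcmn a b \in Lam))
  (n : nat) (L : 'I_n -> 'I_n -> 'I_n) (HL : latin_square L)
  (be ga : {perm 'I_n}) (Hsig : autoparatopism12 1 be ga L) :
  let R := [set i : 'I_n | cyc_len be i \in Lam] in
  let S := [set i : 'I_n | dbl_closure Lam (cyc_len ga i)] in
  R != set0 ->
  #|R| = #|S| /\ is_subsquare L R R /\ symbols_of L R R = S.
Proof.
move=> R S /set0Pn [x0 x0R].
case: HL => Hrow Hcol.
have H1 : forall x y, L (be y) x = ga (L x y).
  move=> x y.
  have : (be y, x, ga (L x y)) \in triples L.
    rewrite -Hsig; apply/imsetP; exists (x, y, L x y).
      by apply/imset2P; exists x y.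
    by rewrite /= perm1.
  by case/imset2P => x' y' _ _ [-> -> ->].
have Hk : forall k x y, L (iter k be x) (iter k be y) = iter k.*2 ga (L x y).
  elim=> [//|k IH] x y.
  by rewrite doubleS !iterS H1 H1 IH.
have sub1 : forall x y, x \in R -> y \in R -> L x y \in S.
  move=> x y; rewrite !inE => xR yR.
  set m := lcmn (cyc_len be x) (cyc_len be y).
  have mL : m \in Lam by exact: Lam_lcmI.
  apply: (dbl_intro Lam_pos Lam_lcm _ mL).
  rewrite -cyc_iter -Hk.
  have /eqP -> : iter m be x == x by rewrite cyc_iter dvdn_lcml.
  by have /eqP -> : iter m be y == y by rewrite cyc_iter dvdn_lcmr.
have sur : forall x z, x \in R -> z \in S -> exists2 y, y \in R & L x y = z.
  move=> x z xR zS.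
  have [g gK Kg] := injF_bij (Hrow x).
  exists (g z); last exact: Kg.
  move: xR zS; rewrite !inE => xR.
  case/dbl_elim => e eL ce.
  set k := lcmn (cyc_len be x) e.
  have kL : k \in Lam by exact: Lam_lcmI.
  apply: (Lam_div Lam_pos Lam_lcm _ kL); rewrite -cyc_iter.
  apply/eqP; apply: (Hrow x).
  have /eqP {1}<- : iter k be x == x by rewrite cyc_iter dvdn_lcml.
  rewrite Hk Kg; apply/eqP; rewrite cyc_iter.
  apply: (dvdn_trans ce); rewrite -!muln2 dvdn_pmul2r // dvdn_lcmr //.
have symS : symbols_of L R R = S.
  rewrite /symbols_of. apply: (iffLR (setP _ _)) => z; apply/idP/idP.
    by case/imset2P => x y xR yR ->; exact: sub1.
  move=> zS; have [y yR <-] := sur x0 z x0R zS.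
  by apply/imset2P; exists x0 y.
have RS : #|R| = #|S|.
  rewrite -(card_imset R (Hrow x0)); apply: eq_card => z.
  apply/imsetP/idP.
    by case=> y yR ->; exact: sub1.
  by move=> zS; have [y yR <-] := sur x0 z x0R zS; exists y.
split; first exact: RS.
split; last exact: symS.
by split => //; rewrite symS RS.
Qed.
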